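(* Let $I\subset\mathbb{Z}$ be an interval and let $\vec r,\vec{\bar r}:I\to\mathbb{R}^2$ be two nondegenerate discrete planar curves whose first and second centroaffine curvatures coincide at corresponding points, i.e. $\kappa_k(\vec r)=\kappa_k(\vec{\bar r})$ and $\bar\kappa_k(\vec r)=\bar\kappa_k(\vec{\bar r})$ for every $k$ at which they are defined. Then there exist a matrix $A\in GL(2,\mathbb{R})$ and a constant vector $\vec C\in\mathbb{R}^2$ such that $\vec r(k)=A\,\vec{\bar r}(k)+\vec C$ for all $k\in I$; i.e. the two curves are affinely equivalent.
   Context: A discrete planar curve is a map $\vec r:I\to\mathbb{R}^2$, $I\subset\mathbb{Z}$ an interval (possibly infinite, containing at least three consecutive integers); write $\vec r_k=\vec r(k)$ and $\vec t_k=\vec r_{k+1}-\vec r_k$ (edge tangent vector). $[\vec a,\vec b]$ denotes the $2\times 2$ determinant. The curve is nondegenerate if $[\vec t_{k-1},\vec t_k]\neq 0$ whenever $k-1,k,k+1\in I$. Its first and second centroaffine curvatures at $k$ (whenever $k-1,k,k+1,k+2\in I$) are $\kappa_k=\frac{[\vec t_k,\vec t_{k+1}]}{[\vec t_{k-1},\vec t_k]}$ and $\bar\kappa_k=\frac{[\vec t_{k-1},\vec t_{k+1}]}{[\vec t_{k-1},\vec t_k]}$. *)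

(* Defs.v *)
From Stdlib Require Import Reals ZArith.
Open Scope R_scope.

Definition vec2 : Type := (R * R)%type.

Definition det2 (a b : vec2) : R := fst a * snd b - snd a * fst b.

(* A discrete planar curve is a map Z -> R^2; only its values on the
   index interval I matter. *)
Definition curve : Type := Z -> vec2.

Definition is_Z_interval (I : Z -> Prop) : Prop :=
  forall a b c : Z, (a <= b <= c)%Z -> I a -> I c -> I b.

Definition tangent (r : curve) (k : Z) : vec2 :=
  (fst (r (k + 1)%Z) - fst (r k), snd (r (k + 1)%Z) - snd (r k)).

Definition nondegenerate (I : Z -> Prop) (r : curve) : Prop :=
  forall k : Z, I (k - 1)%Z -> I k -> I (k + 1)%Z ->
    det2 (tangent r (k - 1)%Z) (tangent r k) <> 0.

Definition kappa (r : curve) (k : Z) : R :=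
  det2 (tangent r k) (tangent r (k + 1)%Z) /
  det2 (tangent r (k - 1)%Z) (tangent r k).

Definition kappa_bar (r : curve) (k : Z) : R :=
  det2 (tangent r (k - 1)%Z) (tangent r (k + 1)%Z) /
  det2 (tangent r (k - 1)%Z) (tangent r k).

Record mat2 : Type := Mat2 { m11 : R; m12 : R; m21 : R; m22 : R }.

Definition mat2_det (A : mat2) : R := m11 A * m22 A - m12 A * m21 A.

Definition affine_apply (A : mat2) (C v : vec2) : vec2 :=
  (m11 A * fst v + m12 A * snd v + fst C,
   m21 A * fst v + m22 A * snd v + snd C).

(* Main.v *)
Require Import Defs.
From Stdlib Require Import Reals ZArith Lra Lia.
Open Scope R_scope.

Definition lin1 (A : mat2) (v : vec2) : R := m11 A * fst v + m12 A * snd v.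
Definition lin2 (A : mat2) (v : vec2) : R := m21 A * fst v + m22 A * snd v.

Lemma fwd_alg A p q s P Q S :
  lin1 A p = fst P -> lin2 A p = snd P -> lin1 A q = fst Q -> lin2 A q = snd Q ->
  det2 P Q <> 0 -> det2 p q <> 0 ->
  det2 Q S / det2 P Q = det2 q s / det2 p q ->
  det2 P S / det2 P Q = det2 p s / det2 p q ->
  lin1 A s = fst S /\ lin2 A s = snd S.
Proof.
  destruct p as [p1 p2], q as [q1 q2], s as [s1 s2], P as [P1 P2], Q as [Q1 Q2], S as [S1 S2].
  unfold lin1, lin2, det2; simpl. intros h1 h2 h3 h4 hD hd e1 e2.
  set (K1 := (q1*s2 - q2*s1)/(p1*q2-p2*q1)) in *.
  set (K2 := (p1*s2 - p2*s1)/(p1*q2-p2*q1)) in *.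
  assert (Hs1 : s1 = -K1*p1 + K2*q1) by (unfold K1, K2; field; auto).
  assert (Hs2 : s2 = -K1*p2 + K2*q2) by (unfold K1, K2; field; auto).
  assert (HS1 : S1 = -K1*P1 + K2*Q1) by (rewrite <- e1, <- e2; field; auto).
  assert (HS2 : S2 = -K1*P2 + K2*Q2) by (rewrite <- e1, <- e2; field; auto).
  split.
  - rewrite Hs1, Hs2, HS1, <- h1, <- h3; ring.
  - rewrite Hs1, Hs2, HS2, <- h2, <- h4; ring.
Qed.

Lemma bwd_alg A p q s P Q S :
  lin1 A q = fst Q -> lin2 A q = snd Q -> lin1 A s = fst S -> lin2 A s = snd S ->
  det2 P Q <> 0 -> det2 p q <> 0 -> det2 Q S <> 0 -> det2 q s <> 0 ->
  det2 Q S / det2 P Q = det2 q s / det2 p q ->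
  det2 P S / det2 P Q = det2 p s / det2 p q ->
  lin1 A p = fst P /\ lin2 A p = snd P.
Proof.
  destruct p as [p1 p2], q as [q1 q2], s as [s1 s2], P as [P1 P2], Q as [Q1 Q2], S as [S1 S2].
  unfold lin1, lin2, det2; simpl. intros h1 h2 h3 h4 hD hd hE he e1 e2.
  set (K1 := (q1*s2 - q2*s1)/(p1*q2-p2*q1)) in *.
  set (K2 := (p1*s2 - p2*s1)/(p1*q2-p2*q1)) in *.
  assert (hK : K1 <> 0).
  { unfold K1, Rdiv. apply Rmult_integral_contrapositive_currified; auto.
    apply Rinv_neq_0_compat; auto. }
  assert (Hp1 : p1 = (K2*q1 - s1)/K1) by (unfold K1, K2; field; auto).
  assert (Hp2 : p2 = (K2*q2 - s2)/K1) by (unfold K1, K2; field; auto).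
  assert (HP1 : P1 = (K2*Q1 - S1)/K1) by (rewrite <- e1, <- e2; field; auto).
  assert (HP2 : P2 = (K2*Q2 - S2)/K1) by (rewrite <- e1, <- e2; field; auto).
  split.
  - rewrite Hp1, Hp2, HP1, <- h1, <- h3; field; auto.
  - rewrite Hp1, Hp2, HP2, <- h2, <- h4; field; auto.
Qed.

Definition mkA (p q P Q : vec2) : mat2 :=
  let d := det2 p q in
  Mat2 ((fst P * snd q - fst Q * snd p)/d) ((fst Q * fst p - fst P * fst q)/d)
       ((snd P * snd q - snd Q * snd p)/d) ((snd Q * fst p - snd P * fst q)/d).

Lemma mkA_spec p q P Q : det2 p q <> 0 ->
  (lin1 (mkA p q P Q) p = fst P /\ lin2 (mkA p q P Q) p = snd P) /\
  (lin1 (mkA p q P Q) q = fst Q /\ lin2 (mkA p q P Q) q = snd Q) /\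
  mat2_det (mkA p q P Q) = det2 P Q / det2 p q.
Proof.
  destruct p as [p1 p2], q as [q1 q2], P as [P1 P2], Q as [Q1 Q2].
  unfold mkA, lin1, lin2, mat2_det, det2; simpl; intro h.
  repeat split; field; auto.
Qed.

Definition Tok (A : mat2) (r rb : curve) (j : Z) : Prop :=
  lin1 A (tangent rb j) = fst (tangent r j) /\ lin2 A (tangent rb j) = snd (tangent r j).

Theorem proposition3p3
  (I : Z -> Prop)
  (HI : is_Z_interval I)
  (H3 : exists k : Z, I k /\ I (k + 1)%Z /\ I (k + 2)%Z)
  (r rb : curve)
  (Hr : nondegenerate I r)
  (Hrb : nondegenerate I rb)
  (Hk : forall k : Z, I (k - 1)%Z -> I k -> I (k + 1)%Z -> I (k + 2)%Z ->
          kappa r k = kappa rb k /\ kappa_bar r k = kappa_bar rb k) :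
  exists (A : mat2) (C : vec2),
    mat2_det A <> 0 /\
    forall k : Z, I k -> r k = affine_apply A C (rb k).
Proof.
  destruct H3 as [k0 [I0 [I1 I2]]].
  assert (Iin : forall a b c, I a -> I c -> (a <= b <= c)%Z -> I b).
  { intros a b c ha hc hb. exact (HI a b c hb ha hc). }
  assert (ND : forall (c : curve), nondegenerate I c -> forall j, I j -> I (j+1)%Z -> I (j+2)%Z ->
            det2 (tangent c j) (tangent c (j+1)) <> 0).
  { intros c Hc j a b d. specialize (Hc (j+1)%Z).
    replace (j+1-1)%Z with j in Hc by ring. replace (j+1+1)%Z with (j+2)%Z in Hc by ring.
    auto. }
  assert (KK : forall j, I j -> I (j+1)%Z -> I (j+2)%Z -> I (j+3)%Z ->
     det2 (tangent r (j+1)) (tangent r (j+2)) / det2 (tangent r j) (tangent r (j+1)) =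
     det2 (tangent rb (j+1)) (tangent rb (j+2)) / det2 (tangent rb j) (tangent rb (j+1)) /\
     det2 (tangent r j) (tangent r (j+2)) / det2 (tangent r j) (tangent r (j+1)) =
     det2 (tangent rb j) (tangent rb (j+2)) / det2 (tangent rb j) (tangent rb (j+1))).
  { intros j a b c d. specialize (Hk (j+1)%Z).
    replace (j+1-1)%Z with j in Hk by ring. replace (j+1+1)%Z with (j+2)%Z in Hk by ring.
    replace (j+1+2)%Z with (j+3)%Z in Hk by ring.
    destruct (Hk a b c d) as [e1 e2]. unfold kappa, kappa_bar in e1, e2.
    replace (j+1-1)%Z with j in e1, e2 by ring. replace (j+1+1)%Z with (j+2)%Z in e1, e2 by ring.
    auto. }
  set (A := mkA (tangent rb k0) (tangent rb (k0+1)) (tangent r k0) (tangent r (k0+1))).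
  assert (dB : det2 (tangent rb k0) (tangent rb (k0+1)) <> 0) by (apply ND; auto).
  assert (dR : det2 (tangent r k0) (tangent r (k0+1)) <> 0) by (apply ND; auto).
  destruct (mkA_spec (tangent rb k0) (tangent rb (k0+1)) (tangent r k0) (tangent r (k0+1)) dB)
    as [T0 [T1 Hdet]]. fold A in T0, T1, Hdet.
  assert (Sf : forall j, I j -> I (j+1)%Z -> I (j+2)%Z -> I (j+3)%Z ->
            Tok A r rb j -> Tok A r rb (j+1) -> Tok A r rb (j+2)).
  { intros j a b c d [h1 h2] [h3 h4]. destruct (KK j a b c d) as [e1 e2].
    apply (fwd_alg A _ _ _ _ _ _ h1 h2 h3 h4); auto. }
  assert (Sb : forall j, I j -> I (j+1)%Z -> I (j+2)%Z -> I (j+3)%Z ->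
            Tok A r rb (j+1) -> Tok A r rb (j+2) -> Tok A r rb j).
  { intros j a b c d [h1 h2] [h3 h4]. destruct (KK j a b c d) as [e1 e2].
    assert (n1 := ND r Hr (j+1)%Z b). assert (n2 := ND rb Hrb (j+1)%Z b).
    replace (j+1+1)%Z with (j+2)%Z in n1, n2 by ring.
    replace (j+1+2)%Z with (j+3)%Z in n1, n2 by ring.
    apply (bwd_alg A _ _ _ _ _ _ h1 h2 h3 h4); auto. }
  assert (TF : forall n : nat, I (k0 + Z.of_nat n + 2)%Z ->
            Tok A r rb (k0 + Z.of_nat n) /\ Tok A r rb (k0 + Z.of_nat n + 1)).
  { induction n as [|n IH]; intro h.
    - simpl. replace (k0+0)%Z with k0 by ring. split; exact (conj (proj1 T0) (proj2 T0)) || exact T1.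
    - rewrite Nat2Z.inj_succ in *. unfold Z.succ in *.
      set (z := Z.of_nat n) in *.
      assert (hz : (0 <= z)%Z) by (unfold z; lia).
      destruct IH as [t0 t1].
      + apply (Iin k0 _ (k0 + (z+1) + 2)%Z); auto; lia.
      + replace (k0 + (z+1))%Z with (k0+z+1)%Z by ring. split; auto.
        replace (k0+z+1+1)%Z with (k0+z+2)%Z by ring.
        apply Sf; auto.
        * apply (Iin k0 _ (k0 + (z+1) + 2)%Z); auto; lia.
        * apply (Iin k0 _ (k0 + (z+1) + 2)%Z); auto; lia.
        * apply (Iin k0 _ (k0 + (z+1) + 2)%Z); auto; lia.
        * replace (k0+z+3)%Z with (k0 + (z+1) + 2)%Z by ring; auto. }
  assert (TB : forall n : nat, I (k0 - Z.of_nat n)%Z ->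
            Tok A r rb (k0 - Z.of_nat n) /\ Tok A r rb (k0 - Z.of_nat n + 1)).
  { induction n as [|n IH]; intro h.
    - simpl. replace (k0-0)%Z with k0 by ring. split; exact (conj (proj1 T0) (proj2 T0)) || exact T1.
    - rewrite Nat2Z.inj_succ in *. unfold Z.succ in *.
      set (z := Z.of_nat n) in *.
      assert (hz : (0 <= z)%Z) by (unfold z; lia).
      destruct IH as [t0 t1].
      + apply (Iin (k0 - (z+1))%Z _ k0); auto; lia.
      + replace (k0 - (z+1) + 1)%Z with (k0 - z)%Z by ring. split; auto.
        apply Sb.
        * auto.
        * apply (Iin (k0 - (z+1))%Z _ (k0+2)%Z); auto; lia.
        * apply (Iin (k0 - (z+1))%Z _ (k0+2)%Z); auto; lia.
        * apply (Iin (k0 - (z+1))%Z _ (k0+2)%Z); auto; lia.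
        * replace (k0 - (z+1) + 1)%Z with (k0 - z)%Z by ring; auto.
        * replace (k0 - (z+1) + 2)%Z with (k0 - z + 1)%Z by ring; auto. }
  assert (TT : forall j, I j -> I (j+1)%Z -> Tok A r rb j).
  { intros j a b. destruct (Z_le_gt_dec j k0) as [hj|hj].
    - replace j with (k0 - Z.of_nat (Z.to_nat (k0 - j)))%Z in * by lia.
      apply TB; auto.
    - destruct (TF (Z.to_nat (j - k0 - 1))) as [_ t].
      + replace (k0 + Z.of_nat (Z.to_nat (j - k0 - 1)) + 2)%Z with (j+1)%Z by lia. auto.
      + replace (k0 + Z.of_nat (Z.to_nat (j - k0 - 1)) + 1)%Z with j in t by lia. exact t. }
  set (C := (fst (r k0) - lin1 A (rb k0), snd (r k0) - lin2 A (rb k0))).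
  exists A, C. split.
  { rewrite Hdet. unfold Rdiv. apply Rmult_integral_contrapositive_currified; auto.
    apply Rinv_neq_0_compat; auto. }
  assert (Pt : forall k, I k -> fst (r k) = lin1 A (rb k) + fst C /\ snd (r k) = lin2 A (rb k) + snd C).
  { assert (PF : forall n : nat, I (k0 + Z.of_nat n)%Z ->
       fst (r (k0 + Z.of_nat n)%Z) = lin1 A (rb (k0 + Z.of_nat n)%Z) + fst C /\
       snd (r (k0 + Z.of_nat n)%Z) = lin2 A (rb (k0 + Z.of_nat n)%Z) + snd C).
    { induction n as [|n IH]; intro h.
      - simpl. replace (k0+0)%Z with k0 by ring. unfold C; simpl; split; ring.
      - rewrite Nat2Z.inj_succ in *. unfold Z.succ in *.
        set (z := Z.of_nat n) in *.
        assert (hz : (0 <= z)%Z) by (unfold z; lia).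
        assert (hI : I (k0 + z)%Z) by (apply (Iin k0 _ (k0 + (z+1))%Z); auto; lia).
        destruct (IH hI) as [p1 p2].
        destruct (TT (k0+z)%Z hI) as [t1 t2].
        { replace (k0+z+1)%Z with (k0+(z+1))%Z by ring; auto. }
        replace (k0 + (z+1))%Z with (k0+z+1)%Z by ring.
        unfold lin1, lin2, tangent in *; simpl in *. split; lra. }
    assert (PB : forall n : nat, I (k0 - Z.of_nat n)%Z ->
       fst (r (k0 - Z.of_nat n)%Z) = lin1 A (rb (k0 - Z.of_nat n)%Z) + fst C /\
       snd (r (k0 - Z.of_nat n)%Z) = lin2 A (rb (k0 - Z.of_nat n)%Z) + snd C).
    { induction n as [|n IH]; intro h.
      - simpl. replace (k0-0)%Z with k0 by ring. unfold C; simpl; split; ring.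
      - rewrite Nat2Z.inj_succ in *. unfold Z.succ in *.
        set (z := Z.of_nat n) in *.
        assert (hz : (0 <= z)%Z) by (unfold z; lia).
        assert (hI : I (k0 - z)%Z) by (apply (Iin (k0 - (z+1))%Z _ k0); auto; lia).
        destruct (IH hI) as [p1 p2].
        destruct (TT (k0-(z+1))%Z h) as [t1 t2].
        { replace (k0-(z+1)+1)%Z with (k0-z)%Z by ring; auto. }
        replace (k0-(z+1)+1)%Z with (k0-z)%Z in t1, t2 by ring.
        unfold lin1, lin2, tangent in *; simpl in *.
        replace (k0-(z+1)+1)%Z with (k0-z)%Z in t1, t2 by ring.
        split; lra. }
    intros k hk. destruct (Z_le_gt_dec k k0) as [hj|hj].
    - replace k with (k0 - Z.of_nat (Z.to_nat (k0 - k)))%Z in * by lia. apply PB; auto.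
    - replace k with (k0 + Z.of_nat (Z.to_nat (k - k0)))%Z in * by lia. apply PF; auto. }
  intros k hk. destruct (Pt k hk) as [e1 e2].
  unfold affine_apply. unfold lin1, lin2 in e1, e2.
  destruct (r k) as [x y]. simpl in *. rewrite e1, e2. reflexivity.
Qed.
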